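(* Every acyclic unique sink orientation of the $n$-dimensional cube with $n \geq 4$ is $(n-2)$-nice.
   Context: Let $Q^n = 2^{[n]}$ be the vertex set of the $n$-cube, with $u,v$ adjacent iff $|u\oplus v|=1$; faces are $F_{J,v}=\{u : v\oplus u\subseteq J\}$ for $J\subseteq[n]$. A unique sink orientation (USO) is an orientation of the cube's edges such that every nonempty face has a unique sink (vertex with no outgoing edges within the face); it is acyclic (an AUSO) if it has no directed cycle. The outmap $s_\psi(v)$ is the set of coordinates $j$ such that the edge $\{v,v\oplus\{j\}\}$ is directed away from $v$; the global sink is the vertex $t$ with $s_\psi(t)=\emptyset$. Let $d(v,u)$ be the length of a shortest directed path from $v$ to $u$ ($\infty$ if none). The reachmap is $r_\psi(v)=s_\psi(v)\cup\{j : \exists u \text{ reachable from } v \text{ by a directed path with } j\in s_\psi(u)\}$. A vertex $v$ is $i$-covered by $u$ if $d(v,u)\le i$ and $r_\psi(u)\subsetneq r_\psi(v)$; $\psi$ is $i$-nice if every vertex other than the global sink is $i$-covered by some vertex. *)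

(* Defs.v *)
From mathcomp Require Import all_boot.
Set Implicit Arguments. Unset Strict Implicit. Unset Printing Implicit Defensive.

Definition vtx (n : nat) := {set 'I_n}.

Definition symd (n : nat) (u v : {set 'I_n}) : {set 'I_n} := (u :\: v) :|: (v :\: u).

Definition adjacent (n : nat) (u v : {set 'I_n}) : bool := #|symd u v| == 1.

Definition is_orientation (n : nat) (arc : rel {set 'I_n}) : Prop :=
  (forall u v, arc u v -> adjacent u v) /\
  (forall u v, adjacent u v -> arc u v (+) arc v u).

Definition face (n : nat) (J v : {set 'I_n}) : {set {set 'I_n}} :=
  [set u | symd v u \subset J].

Definition is_face_sink (n : nat) (arc : rel {set 'I_n}) (F : {set {set 'I_n}})
  (u : {set 'I_n}) : bool :=
  (u \in F) && [forall w, (w \in F) ==> adjacent u w ==> ~~ arc u w].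

Definition is_USO (n : nat) (arc : rel {set 'I_n}) : Prop :=
  is_orientation arc /\
  forall J v : {set 'I_n}, face J v != set0 ->
    exists! u, is_face_sink arc (face J v) u.

Definition acyclic (n : nat) (arc : rel {set 'I_n}) : Prop :=
  forall u v, arc u v -> ~~ connect arc v u.

Definition is_AUSO (n : nat) (arc : rel {set 'I_n}) : Prop :=
  is_USO arc /\ acyclic arc.

Definition outmap (n : nat) (arc : rel {set 'I_n}) (v : {set 'I_n}) : {set 'I_n} :=
  [set j | arc v (symd v [set j])].

Definition dist_le (n : nat) (arc : rel {set 'I_n}) (i : nat) (v u : {set 'I_n}) : Prop :=
  exists p : seq {set 'I_n}, [/\ size p <= i, path arc v p & last v p = u].

Definition reachmap (n : nat) (arc : rel {set 'I_n}) (v : {set 'I_n}) : {set 'I_n} :=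
  outmap arc v :|: \bigcup_(u | connect arc v u) outmap arc u.

Definition i_covered (n : nat) (arc : rel {set 'I_n}) (i : nat) (v u : {set 'I_n}) : Prop :=
  dist_le arc i v u /\ reachmap arc u \proper reachmap arc v.

Definition global_sink (n : nat) (arc : rel {set 'I_n}) (t : {set 'I_n}) : Prop :=
  outmap arc t = set0.

Definition i_nice (n : nat) (arc : rel {set 'I_n}) (i : nat) : Prop :=
  forall v, ~ global_sink arc v -> exists u, i_covered arc i v u.

(* Main.v *)
Require Import Defs.
From mathcomp Require Import all_boot.
From mathcomp Require Import zify.
Set Implicit Arguments. Unset Strict Implicit. Unset Printing Implicit Defensive.



Lemma in_symd (n : nat) (u v : {set 'I_n}) j :
  (j \in symd u v) = (j \in u) (+) (j \in v).
Proof. by rewrite /symd !inE; case: (j \in u); case: (j \in v). Qed.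

Lemma symdC (n : nat) (u v : {set 'I_n}) : symd u v = symd v u.
Proof. by apply/setP => j; rewrite !in_symd addbC. Qed.

Lemma symdA (n : nat) (u v w : {set 'I_n}) :
  symd u (symd v w) = symd (symd u v) w.
Proof. by apply/setP => j; rewrite !in_symd addbA. Qed.

Lemma symdvv (n : nat) (u : {set 'I_n}) : symd u u = set0.
Proof. by apply/setP => j; rewrite !in_symd addbb inE. Qed.

Lemma symd0l (n : nat) (u : {set 'I_n}) : symd set0 u = u.
Proof. by apply/setP => j; rewrite !in_symd inE. Qed.

Lemma symdKl (n : nat) (u w : {set 'I_n}) : symd u (symd u w) = w.
Proof. by rewrite symdA symdvv symd0l. Qed.

Lemma symdCr (n : nat) (u w : {set 'I_n}) : symd u (~: w) = ~: symd u w.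
Proof. by apply/setP => j; rewrite in_setC !in_symd in_setC; case: (j \in u); case: (j \in w). Qed.

Lemma symd_eq0 (n : nat) (u w : {set 'I_n}) : (symd u w == set0) = (u == w).
Proof.
apply/eqP/eqP => [h|->]; last exact: symdvv.
by rewrite -(symdKl u w) h symdC symd0l.
Qed.

Lemma card_symd1 (n : nat) (A : {set 'I_n}) j :
  #|symd A [set j]| = if j \in A then (#|A|).-1 else (#|A|).+1.
Proof.
case: ifP => hj.
  have -> : symd A [set j] = A :\ j.
    by apply/setP => i; rewrite in_symd !inE; case: (i =P j) => [->|]; rewrite ?hj ?addbT ?addbF.
  by rewrite (cardsD1 j A) hj.
have -> : symd A [set j] = j |: A.
  by apply/setP => i; rewrite in_symd !inE; case: (i =P j) => [->|]; rewrite ?hj ?addbT ?addbF ?orbF.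
by rewrite cardsU1 hj.
Qed.

Lemma adjP (n : nat) (u w : {set 'I_n}) :
  adjacent u w -> exists j, w = symd u [set j].
Proof. by move=> /cards1P [j hj]; exists j; rewrite -hj symdKl. Qed.

Lemma adj1 (n : nat) (u : {set 'I_n}) j : adjacent u (symd u [set j]).
Proof. by rewrite /adjacent symdKl cards1. Qed.


Lemma arcP (n : nat) (arc : rel {set 'I_n}) : is_orientation arc ->
  forall u w, arc u w -> exists2 j, w = symd u [set j] & j \in outmap arc u.
Proof.
move=> [H1 H2] u w a; have [j hj] := adjP (H1 _ _ a).
by exists j => //; rewrite inE -hj.
Qed.

Lemma arc_asym (n : nat) (arc : rel {set 'I_n}) : is_orientation arc ->
  forall u w, arc u w -> ~~ arc w u.
Proof.
move=> [H1 H2] u w a; have := H2 _ _ (H1 _ _ a).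
by rewrite a.
Qed.

Lemma gsink_face (n : nat) (arc : rel {set 'I_n}) : is_orientation arc ->
  forall x, outmap arc x = set0 -> is_face_sink arc (face setT set0) x.
Proof.
move=> Ho x hx; apply/andP; split; first by rewrite inE subsetT.
apply/forallP => w; apply/implyP => _; apply/implyP => /adjP [j ->].
apply/negP => a; have : j \in outmap arc x by rewrite inE.
by rewrite hx inE.
Qed.

Lemma gsink_uniq (n : nat) (arc : rel {set 'I_n}) : is_USO arc ->
  forall x y, outmap arc x = set0 -> outmap arc y = set0 -> x = y.
Proof.
move=> [Ho HU] x y hx hy.
have ne : face [set: 'I_n] set0 != set0.
  by apply/set0Pn; exists x; rewrite inE subsetT.
have [u [_ hu]] := HU setT set0 ne.
by rewrite -(hu _ (gsink_face Ho hx)) (hu _ (gsink_face Ho hy)).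
Qed.

Lemma gsink_ex (n : nat) (arc : rel {set 'I_n}) : is_USO arc ->
  exists t, outmap arc t = set0.
Proof.
move=> [Ho HU].
have ne : face setT (set0 : {set 'I_n}) != set0.
  by apply/set0Pn; exists set0; rewrite inE subsetT.
have [u [/andP [_ /forallP hu] _]] := HU setT set0 ne.
exists u; apply/setP => j; rewrite !inE; apply/negbTE.
have := hu (symd u [set j]); rewrite inE subsetT adj1 /=; exact.
Qed.

Lemma noout_connect (n : nat) (arc : rel {set 'I_n}) : is_orientation arc ->
  forall x y, outmap arc x = set0 -> connect arc x y -> y = x.
Proof.
move=> Ho x y hx /connectP [[|w p] /= hp ->] //.
move: hp => /andP [a _]; have [j _ hj] := arcP Ho a.
by move: hj; rewrite hx inE.
Qed.

Lemma reachP (n : nat) (arc : rel {set 'I_n}) x j :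
  reflect (exists2 y, connect arc x y & j \in outmap arc y) (j \in reachmap arc x).
Proof.
rewrite /reachmap inE; apply: (iffP orP) => [[h|/bigcupP [y hy hj]]|[y hy hj]].
- by exists x.
- by exists y.
- by right; apply/bigcupP; exists y.
Qed.

Lemma reach_mono (n : nat) (arc : rel {set 'I_n}) x y :
  connect arc x y -> reachmap arc y \subset reachmap arc x.
Proof.
move=> cxy; apply/subsetP => j /reachP [w cyw hj]; apply/reachP.
by exists w => //; exact: connect_trans cxy cyw.
Qed.

Lemma symd_reach (n : nat) (arc : rel {set 'I_n}) : is_orientation arc ->
  forall v u, connect arc v u -> symd v u \subset reachmap arc v.
Proof.
move=> Ho v u /connectP [p hp ->]; elim: p v hp => [|w p IH] v /=.
  by rewrite symdvv sub0set.
move=> /andP [a hp]; have [j hw hj] := arcP Ho a.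
have sub := IH _ hp.
apply/subsetP => i; rewrite in_symd => hi.
case: (i =P j) => [->|nij]; first by apply/reachP; exists v.
have : i \in symd w (last w p).
  rewrite in_symd {1}hw in_symd inE; move/eqP/negbTE: nij => ->; rewrite addbF.
  by [].
move/(subsetP sub) => /reachP [y cy hy]; apply/reachP; exists y => //.
by apply: connect_trans cy; apply: connect1.
Qed.

Lemma noCycle (n : nat) (arc : rel {set 'I_n}) : acyclic arc ->
  forall x y, connect arc x y -> connect arc y x -> x = y.
Proof.
move=> Ha x y /connectP [[|w p] /= hp ->] // cyx.
move: hp => /andP [a hp].
have cwy : connect arc w (last w p) by apply/connectP; exists p.
by have := Ha _ _ a; rewrite (connect_trans cwy cyx).
Qed.

Lemma symdAC (n : nat) (a b c : {set 'I_n}) : symd (symd a b) c = symd (symd a c) b.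
Proof. by apply/setP => i; rewrite !in_symd addbAC. Qed.

Lemma symd1_in (n : nat) (A : {set 'I_n}) j i : j != i -> (i \in symd A [set j]) = (i \in A).
Proof. by move=> h; rewrite in_symd inE eq_sym (negbTE h) addbF. Qed.

Lemma pathP (n : nat) (arc : rel {set 'I_n}) : is_USO arc -> forall x m v,
  #|symd v x| <= m -> (forall j, j \in symd v x -> ~~ arc x (symd x [set j])) ->
  exists p, [/\ size p <= #|symd v x|, path arc v p & last v p = x].
Proof.
move=> [Ho HU] x; elim=> [|m IH] v hm hc.
  have : symd v x == set0 by rewrite -cards_eq0 -leqn0.
  by rewrite symd_eq0 => /eqP ->; exists [::].
case: (v =P x) => [->|nvx]; first by exists [::].
pose F := face (symd v x) v.
have xs : is_face_sink arc F x.
  apply/andP; split; first by rewrite inE subxx.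
  apply/forallP => w; apply/implyP; rewrite inE => hw; apply/implyP => /adjP [j hwj].
  case hj: (j \in symd v x); first by rewrite hwj; apply: hc.
  have : j \in symd v w by rewrite hwj symdA in_symd hj inE eqxx.
  by move/(subsetP hw); rewrite hj.
have vF : v \in F by rewrite inE symdvv sub0set.
have ne : F != set0 by apply/set0Pn; exists v.
have [u [_ hu]] := HU (symd v x) v ne.
have : ~~ is_face_sink arc F v.
  by apply/negP => vs; apply: nvx; rewrite -(hu _ vs) (hu _ xs).
rewrite /is_face_sink vF /= negb_forall => /existsP [w].
rewrite !negb_imply => /andP [hwF /andP [/adjP [j hwj] a]].
have jin : j \in symd v x.
  by move: hwF; rewrite inE hwj symdKl sub1set.
have ewx : symd w x = symd (symd v x) [set j] by rewrite hwj symdAC.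
have cw : #|symd w x| = (#|symd v x|).-1 by rewrite ewx card_symd1 jin.
have hm' : #|symd w x| <= m by rewrite cw; move: hm; case: #|symd v x|.
have hc' : forall i, i \in symd w x -> ~~ arc x (symd x [set i]).
  move=> i hi; apply: hc; move: hi; rewrite ewx in_symd inE.
  by case: (i =P j) => [->|_]; rewrite ?jin // addbF.
have [p [h1 h2 h3]] := IH w hm' hc'.
exists (w :: p); split => //=; last by move: a; rewrite andbT => ->.
have : 0 < #|symd v x| by apply/card_gt0P; exists j.
by move: h1; rewrite cw; case: #|symd v x|.
Qed.

Theorem theorem13 (n : nat) (arc : rel {set 'I_n}) :
  4 <= n -> is_AUSO arc -> i_nice arc (n - 2).
Proof.
move=> n4 [HU Hac]; have Ho := HU.1.
have [t ht] := gsink_ex HU.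
move=> v nv.
have cardC : forall X : {set 'I_n}, #|~: X| = n - #|X|.
  by move=> X; have := cardsC X; rewrite card_ord; lia.
have cardle : forall X : {set 'I_n}, #|X| <= n.
  by move=> X; have := cardsC X; rewrite card_ord; lia.
have tpath : exists p, [/\ size p <= #|symd v t|, path arc v p & last v p = t].
  apply: (@pathP _ _ HU t _ v (leqnn _)) => j _; apply/negP => a.
  have : j \in outmap arc t by rewrite inE.
  by rewrite ht inE.
have ctv : connect arc v t.
  by have [p [_ h1 h2]] := tpath; apply/connectP; exists p.
have rv0 : reachmap arc v != set0.
  have : outmap arc v != set0 by apply/eqP.
  by case/set0Pn => j hj; apply/set0Pn; exists j; apply/reachP; exists v.
case: (leqP #|symd v t| (n - 2)) => hvt.
  exists t; split.
    by have [p [h1 h2 h3]] := tpath; exists p; split => //; apply: leq_trans hvt.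
  have -> : reachmap arc t = set0.
    apply/setP => j; rewrite in_set0; apply/negbTE/negP => /reachP [y cy].
    by rewrite (noout_connect Ho ht cy) ht inE.
  by rewrite proper0.
set vb := ~: v.
have Dt : #|symd t vb| <= 1.
  by rewrite /vb symdCr cardC symdC; lia.
pose reach y := [set w | connect arc y w].
pose Cand y := 1 < #|symd y vb|.
have Cv : Cand v.
  by rewrite /Cand /vb symdCr symdvv setC0 cardsT card_ord; lia.
case: (arg_minnP (fun y => #|reach y|) Cv) => z Cz zmin.
have Z1 : forall y, connect arc z y -> y != z -> #|symd y vb| <= 1.
  move=> y czy nyz; rewrite leqNgt; apply/negP => Cy; have := zmin y Cy.
  have : reach y \proper reach z.
    apply/properP; split.
      by apply/subsetP => w; rewrite !inE => cyw; apply: connect_trans czy cyw.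
    exists z; rewrite !inE ?connect0 //; apply/negP => cyz.
    by move: nyz; rewrite (noCycle Hac czy cyz) eqxx.
  by move/proper_card => lt le; move: (leq_trans lt le); rewrite ltnn.
set A := symd z vb.
have zt : z != t.
  by apply/eqP => ezt; move: Cz Dt; rewrite /Cand ezt; lia.
have outz : forall j, j \in outmap arc z -> (j \in A) && (#|A| <= 2).
  move=> j hj; set w := symd z [set j].
  have a : arc z w by move: hj; rewrite inE.
  have czw : connect arc z w by apply: connect1.
  have nzw : z != w.
    rewrite -symd_eq0 /w symdKl; apply/set0Pn; exists j; rewrite inE.
    by [].
  have := Z1 w czw; rewrite eq_sym nzw => /(_ isT).
  rewrite /w symdAC -/A card_symd1; move: Cz; rewrite /Cand -/A.
  by case: ifP => _ /=; lia.
have sA : outmap arc z \subset A.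
  by apply/subsetP => j /outz /andP [].
have A2 : #|A| = 2.
  have : outmap arc z != set0.
    by apply/eqP => h; move: zt; rewrite (gsink_uniq HU h ht) eqxx.
  case/set0Pn => j /outz /andP [_ h]; move: Cz; rewrite /Cand -/A; lia.
have ezv : symd v z = ~: A by rewrite /A /vb symdCr setCK symdC.
have zpath : exists p, [/\ size p <= #|symd v z|, path arc v p & last v p = z].
  apply: (@pathP _ _ HU z _ v (leqnn _)) => j hj; apply/negP => a.
  have : j \in outmap arc z by rewrite inE.
  by move/(subsetP sA); move: hj; rewrite ezv inE => /negbTE ->.
have cvz : connect arc v z.
  by have [p [_ h1 h2]] := zpath; apply/connectP; exists p.
set B := A :|: symd t vb.
have step : forall y j, connect arc z y -> (y = z \/ symd y vb \subset B) ->
    arc y (symd y [set j]) -> j \in B.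
  move=> y j czy hy a.
  case: (y =P z) => [eyz|nyz].
    have : j \in outmap arc z by rewrite -eyz inE.
    by move/(subsetP sA) => h; rewrite in_setU h.
  case: hy => [//|hy].
  case hjD: (j \in symd y vb); first exact: (subsetP hy).
  set w := symd y [set j].
  have czw : connect arc z w by apply: connect_trans czy (connect1 a).
  have nwz : w != z.
    apply/eqP => ewz; have := Hac y w a; by rewrite ewz czy.
  have Dy := Z1 y czy (introN eqP nyz).
  have Dw := Z1 w czw nwz.
  have eDw : symd w vb = symd (symd y vb) [set j] by rewrite /w symdAC.
  have Dy0 : symd y vb = set0.
    apply/eqP; rewrite -cards_eq0; move: Dw; rewrite eDw card_symd1 hjD; lia.
  have eDw1 : symd w vb = [set j] by rewrite eDw Dy0 symd0l.
  have ow : outmap arc w = set0.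
    apply/setP => f; rewrite inE in_set0; apply/negbTE/negP => a2.
    set w' := symd w [set f] in a2.
    have czw' : connect arc z w' by apply: connect_trans czw (connect1 a2).
    case: (f =P j) => [efj|nfj].
      have ey : w' = y by rewrite /w' /w efj -symdA symdvv symdC symd0l.
      by move: a2; rewrite ey => a2; have := arc_asym Ho a; rewrite a2.
    have nw'z : w' != z.
      apply/eqP => ew'z; have := Hac w w' a2; by rewrite ew'z czw.
    have := Z1 w' czw' nw'z.
    have eDw' : symd w' vb = symd [set j] [set f] by rewrite /w' symdAC eDw1.
    rewrite eDw' card_symd1 inE.
    by move/eqP/negbTE: nfj; rewrite eq_sym => ->; rewrite cards1.
  have ewt := gsink_uniq HU ow ht.
  by rewrite in_setU -ewt eDw1 set11 orbT.
have inv : forall p y, connect arc z y -> (y = z \/ symd y vb \subset B) ->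
    path arc y p -> connect arc z (last y p) /\ (last y p = z \/ symd (last y p) vb \subset B).
  elim=> [|w p IH] y czy hy //= /andP [a hp].
  have [j hw _] := arcP Ho a.
  have jB : j \in B by apply: step czy hy _; rewrite -hw.
  apply: IH hp; first by apply: connect_trans czy (connect1 a).
  right; apply/subsetP => i; rewrite hw symdAC in_symd inE.
  case: (i =P j) => [->|_]; first by rewrite jB.
  rewrite addbF => hi; case: hy => [eyz|hy]; last exact: (subsetP hy).
  by rewrite in_setU; move: hi; rewrite eyz => ->.
have rz : reachmap arc z \subset B.
  apply/subsetP => j /reachP [y czy hj].
  have [p hp ey] := connectP czy.
  have [_ hy] := inv p z (connect0 _ _) (or_introl erefl) hp.
  rewrite -ey in hy; apply: step czy hy _; by move: hj; rewrite inE.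
exists z; split.
  have [p [h1 h2 h3]] := zpath; exists p; split => //.
  by move: h1; rewrite ezv cardC A2.
rewrite properE (reach_mono cvz) /=; apply/negP => sub.
have svt : symd v t \subset B.
  by apply: subset_trans (symd_reach Ho ctv) (subset_trans sub rz).
have : [set: 'I_n] \subset B.
  apply/subsetP => i _; case hi: (i \in symd v t); first exact: (subsetP svt).
  by rewrite in_setU /vb symdCr in_setC symdC hi orbT.
move/subset_leq_card; rewrite cardsT card_ord cardsU A2; lia.
Qed.
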